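(* Let $X$ be a fibrewise pointed space over $B$. Then $\mathrm{TC}_B(X)=0$ if and only if $X$ is fibrewise homotopy equivalent to $B$ (where $B$ is regarded as a fibrewise space over itself via the identity).
   Context: A fibrewise space over $B$ is a space $X$ with a map $p_X:X\to B$; fibrewise maps satisfy $p_Y\circ f=p_X$; fibrewise homotopies $H:X\times I\to Y$ satisfy $p_Y(H(x,t))=p_X(x)$, written $\simeq_B$. A fibrewise pointed space is a fibrewise space $X$ with a map $s_X:B\to X$ such that $p_X\circ s_X=1_B$. For a fibrewise map $f:E\to X$, an open $U\subseteq X$ is fibrewise sectional if there is a fibrewise map $s:U\to E$ with $f\circ s\simeq_B$ the inclusion; $\mathrm{secat}_B(f)$ is the least $k$ such that $X$ is covered by $k+1$ such open sets. $X\times_BX=\{(x,y):p_X(x)=p_X(y)\}$; $P_B(X)=\{(b,\alpha)\in B\times X^I: p_X\circ\alpha\equiv b\}$ with projection $(b,\alpha)\mapsto b$; $\Pi_X(b,\alpha)=(\alpha(0),\alpha(1))$; $\mathrm{TC}_B(X):=\mathrm{secat}_B(\Pi_X)$. *)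

(* Defs.v *)
From HB Require Import structures.
From mathcomp Require Import all_boot all_order all_algebra.
From mathcomp Require Import all_classical all_reals.
From mathcomp Require Import topology normedtype.
Import numFieldNormedType.Exports.

Set Implicit Arguments.
Unset Strict Implicit.
Unset Printing Implicit Defensive.

Import Order.TTheory GRing.Theory Num.Theory.
Local Open Scope classical_set_scope.
Local Open Scope ring_scope.

Definition unitI_set (R : realType) : set R := `[0, 1].
Arguments unitI_set : clear implicits.
Notation unitI R := (set_type (unitI_set R)).

Lemma unitI0_mem (R : realType) : (0 : R) \in unitI_set R.
Proof. by apply/mem_set; rewrite /unitI_set /= in_itv /= lexx ler01. Qed.

Lemma unitI1_mem (R : realType) : (1 : R) \in unitI_set R.
Proof. by apply/mem_set; rewrite /unitI_set /= in_itv /= lexx ler01. Qed.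

Definition i0 (R : realType) : unitI R := exist _ 0 (unitI0_mem R).
Definition i1 (R : realType) : unitI R := exist _ 1 (unitI1_mem R).

Section Fibrewise.
Variable R : realType.
Variable B : topologicalType.

Definition fw_map (X Y : topologicalType) (pX : X -> B) (pY : Y -> B)
  (f : X -> Y) : Prop :=
  continuous f /\ forall x, pY (f x) = pX x.

Definition fw_homotopic (X Y : topologicalType) (pX : X -> B) (pY : Y -> B)
  (f g : X -> Y) : Prop :=
  exists H : X * unitI R -> Y,
    [/\ continuous H,
        (forall x t, pY (H (x, t)) = pX x),
        (forall x, H (x, i0 R) = f x) &
        (forall x, H (x, i1 R) = g x)].

Definition fw_homotopy_equivalent (X Y : topologicalType) (pX : X -> B)
  (pY : Y -> B) : Prop :=
  exists (f : X -> Y) (g : Y -> X),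
    [/\ fw_map pX pY f, fw_map pY pX g,
        fw_homotopic pX pX (g \o f) id &
        fw_homotopic pY pY (f \o g) id].

Definition fw_pointed (X : topologicalType) (p : X -> B) (s : B -> X) : Prop :=
  [/\ continuous p, continuous s & forall b, p (s b) = b].

Definition fw_sectional (E X : topologicalType) (pE : E -> B) (pX : X -> B)
  (f : E -> X) (U : set X) : Prop :=
  open U /\
  exists s : set_type U -> E,
    fw_map (pX \o set_val) pE s /\
    fw_homotopic (pX \o set_val) pX (f \o s) set_val.

Definition secat_le (E X : topologicalType) (pE : E -> B) (pX : X -> B)
  (f : E -> X) (k : nat) : Prop :=
  exists U : 'I_k.+1 -> set X,
    (forall i, fw_sectional pE pX f (U i)) /\
    (forall x, exists i, U i x).

Definition secat_eq (E X : topologicalType) (pE : E -> B) (pX : X -> B)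
  (f : E -> X) (k : nat) : Prop :=
  secat_le pE pX f k /\ forall j, secat_le pE pX f j -> (k <= j)%N.

Section PathFibration.
Variables (X : topologicalType) (p : X -> B).

Definition fprod_set : set (X * X) := [set xy | p xy.1 = p xy.2].
Definition fprod : Type := set_type fprod_set.
Definition fprod_proj (u : fprod) : B := p (set_val u).1.

Definition PB_set : set (B * {compact-open, unitI R -> X}) :=
  [set ba | continuous (ba.2 : unitI R -> X) /\ forall t, p (ba.2 t) = ba.1].
Definition PB : Type := set_type PB_set.
Definition PB_proj (u : PB) : B := (set_val u).1.

Lemma Pi_mem (u : PB) :
  ((set_val u).2 (i0 R), (set_val u).2 (i1 R)) \in fprod_set.
Proof.
case: u => [[b a] /set_mem [_ Ha]] /=; apply/mem_set => /=.
by rewrite /fprod_set /=; have /= -> := Ha (i0 R); have /= -> := Ha (i1 R).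
Qed.

Definition Pi (u : PB) : fprod := exist (fun xy => xy \in fprod_set) _ (Pi_mem u).

Definition TC_eq (k : nat) : Prop := secat_eq PB_proj fprod_proj Pi k.

End PathFibration.
End Fibrewise.

(* Main.v *)
Require Import Defs.
From mathcomp Require Import all_boot all_order all_algebra.
From mathcomp Require Import all_classical all_reals.
From mathcomp Require Import topology normedtype.
Import numFieldNormedType.Exports.

Set Implicit Arguments.
Unset Strict Implicit.
Unset Printing Implicit Defensive.
Import Order.TTheory GRing.Theory Num.Theory.
Local Open Scope classical_set_scope.
Local Open Scope ring_scope.

Section Helpers.
Variable R : realType.

Lemma cts_into_sub (Z Y : topologicalType) (A : set Y) (f : Z -> set_type A) :
  continuous (set_val \o f) -> continuous f.
Proof. move=> cf; exact: (@continuous_comp_initial _ Z Y set_val f cf). Qed.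

Lemma cts_set_val (Y : topologicalType) (A : set Y) :
  continuous (set_val : set_type A -> Y).
Proof. exact: initial_continuous. Qed.

Definition clampr (r : R) : R := Num.min 1 (Num.max 0 r).

Lemma clampr_mem r : clampr r \in unitI_set R.
Proof.
apply/mem_set; rewrite /unitI_set /= in_itv /= /clampr.
by rewrite ge_min lexx orTb andbT le_min ler01 le_max lexx.

Qed.

Definition clampI (r : R) : unitI R := exist _ (clampr r) (clampr_mem r).

Lemma clampI_cts : continuous clampI.
Proof.
apply: cts_into_sub => x /=.
apply: (@continuous_min R R (fun _ => 1) (fun r => Num.max 0 r)).
  exact: cvg_cst.
apply: (@continuous_max R R (fun _ => 0) (fun r => r)); first exact: cvg_cst.
exact: cvg_id.
Qed.


Lemma eqI (a b : unitI R) : set_val a = set_val b -> a = b.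
Proof. by move=> h; apply: eq_sig_hprop => //= x ? ?; apply: Prop_irrelevance. Qed.

Lemma clampr_id r : 0 <= r <= 1 -> clampr r = r.
Proof.
case/andP=> h0 h1; rewrite /clampr.
have -> : Num.max 0 r = r by rewrite max_r.
by rewrite min_r.
Qed.

Lemma clampI0 : clampI 0 = i0 R.
Proof. by apply: eqI; rewrite /= -[LHS]/(clampr _) clampr_id // lexx ler01. Qed.

Lemma clampI1 : clampI 1 = i1 R.
Proof. by apply: eqI; rewrite /= -[LHS]/(clampr _) clampr_id // lexx ler01. Qed.

Lemma valI_bnd (t : unitI R) : 0 <= set_val t <= 1.
Proof. by case: t => x /= h; move: (set_mem h); rewrite /unitI_set /= in_itv. Qed.

End Helpers.

Lemma cts_pair (T U V : topologicalType) (f : T -> U) (g : T -> V) :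
  continuous f -> continuous g -> continuous (fun x => (f x, g x)).
Proof. by move=> cf cg x; apply: cvg_pair; [exact: cf | exact: cg]. Qed.

Lemma cts_fst (U V : topologicalType) : continuous (fst : U * V -> U).
Proof. by move=> x; exact: cvg_fst. Qed.

Lemma cts_snd (U V : topologicalType) : continuous (snd : U * V -> V).
Proof. by move=> x; exact: cvg_snd. Qed.

Lemma cts_comp (T U V : topologicalType) (f : T -> U) (g : U -> V) :
  continuous f -> continuous g -> continuous (g \o f).
Proof. by move=> cf cg x; apply: continuous_comp; [exact: cf | exact: cg]. Qed.

Lemma cts_compE (T U V : topologicalType) (f : T -> U) (g : U -> V) (h : T -> V) :
  continuous f -> continuous g -> h = g \o f -> continuous h.
Proof. by move=> cf cg ->; exact: cts_comp. Qed.

Section Homot.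
Variables (R : realType) (B X Y : topologicalType) (pX : X -> B) (pY : Y -> B).

Lemma fw_homotopic_sym (f g : X -> Y) :
  fw_homotopic R pX pY f g -> fw_homotopic R pX pY g f.
Proof.
case=> H [cH fH H0 H1].
exists (fun z => H (z.1, clampI (1 - set_val z.2))); split.
- apply: (@cts_comp _ _ _ (fun z : X * unitI R => (z.1, clampI (1 - set_val z.2))) H) => //.
  apply: cts_pair; first exact: cts_fst.
  apply: (@cts_comp _ _ _ (fun z : X * unitI R => 1 - set_val z.2) (@clampI R)); last exact: clampI_cts.
  move=> z; apply: cvgB; first exact: cvg_cst.
  apply: (@cts_comp _ _ _ snd set_val); [exact: cts_snd | exact: cts_set_val].
- by move=> x t; rewrite fH.
- by move=> x; rewrite /= subr0 clampI1 H1.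
- by move=> x; rewrite /= subrr clampI0 H0.
Qed.


Lemma closed_vle (c : R) : closed [set z : X * unitI R | set_val z.2 <= c].
Proof.
have -> : [set z : X * unitI R | set_val z.2 <= c] =
  (set_val \o snd) @^-1` [set x : R | x <= c] by [].
apply: (proj1 (continuous_closedP _)); last exact: closed_le.
apply: cts_comp; [exact: cts_snd | exact: cts_set_val].
Qed.

Lemma closed_vge (c : R) : closed [set z : X * unitI R | c <= set_val z.2].
Proof.
have -> : [set z : X * unitI R | c <= set_val z.2] =
  (set_val \o snd) @^-1` [set x : R | c <= x] by [].
apply: (proj1 (continuous_closedP _)); last exact: closed_ge.
apply: cts_comp; [exact: cts_snd | exact: cts_set_val].
Qed.

Lemma cts_reparam (a b : R) :
  continuous (fun z : X * unitI R => (z.1, clampI (a * set_val z.2 + b))).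
Proof.
apply: cts_pair; first exact: cts_fst.
apply: (@cts_comp _ _ _ (fun z : X * unitI R => a * set_val z.2 + b) (@clampI R)); last exact: clampI_cts.
move=> z; apply: cvgD; last exact: cvg_cst.
apply: cvgM; first exact: cvg_cst.
apply: (@cts_comp _ _ _ snd set_val); [exact: cts_snd | exact: cts_set_val].
Qed.

Lemma fw_homotopic_trans (f g h : X -> Y) :
  fw_homotopic R pX pY f g -> fw_homotopic R pX pY g h ->
  fw_homotopic R pX pY f h.
Proof.
case=> H1 [cH1 fH1 H10 H11]; case=> H2 [cH2 fH2 H20 H21].
pose G1 := H1 \o (fun z : X * unitI R => (z.1, clampI (2 * set_val z.2 + 0))).
pose G2 := H2 \o (fun z : X * unitI R => (z.1, clampI (2 * set_val z.2 + (-1)))).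
exists (fun z => if set_val z.2 <= 2^-1 then G1 z else G2 z); split.
- apply/continuous_subspace_setT.
  have -> : [set: X * unitI R] = [set z : X * unitI R | set_val z.2 <= 2^-1]
     `|` [set z : X * unitI R | 2^-1 <= set_val z.2].
    apply/seteqP; split => z // _.
    by case: (lerP (set_val z.2) 2^-1) => hz; [left | right; apply: ltW].
  apply: withinU_continuous; [exact: closed_vle | exact: closed_vge | |].
  + apply: (@subspace_eq_continuous _ _ _ G1).
      by move=> z /set_mem /= hz; rewrite /from_subspace /= hz.
    apply: continuous_subspaceT.
    apply: cts_comp; last exact: cH1. exact: (@cts_reparam 2 0).
  + apply: (@subspace_eq_continuous _ _ _ G2).
      move=> z /set_mem /= hz; rewrite /from_subspace /=; case: ifP => // hz'.
      have e : set_val z.2 = 2^-1 by apply/eqP; rewrite eq_le hz hz'.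
      rewrite /G1 /G2 /= e mulfV ?pnatr_eq0 // addr0 subrr clampI1 clampI0.
      by rewrite H11 H20.
    apply: continuous_subspaceT.
    apply: cts_comp; last exact: cH2. exact: (@cts_reparam 2 (-1)).
- by move=> x t; case: ifP => _; rewrite /G1 /G2 /= ?fH1 ?fH2.
- move=> x; rewrite /= ifT; last by rewrite invr_ge0 ler0n.
  by rewrite /G1 /= mulr0 addr0 clampI0 H10.
- move=> x; rewrite /= ifF; last first.
    apply/negbTE; rewrite -ltNge invf_lt1 ?ltr0n // ltr1n //.
  rewrite /G2 /=.
  have -> : 2 * 1 - 1 = 1 :> R by rewrite mulr1 addrK.
  by rewrite clampI1 H21.
Qed.

End Homot.

Section Eval.
Variable R : realType.

Lemma unitI_compact : compact [set: unitI R].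
Proof.
have -> : [set: unitI R] = (@clampI R) @` `[0, 1].
  apply/seteqP; split => t // _; exists (set_val t).
    by rewrite /= in_itv /=; exact: valI_bnd.
  by apply: eqI; rewrite /= -[LHS]/(clampr _) clampr_id //; exact: valI_bnd.
apply: continuous_compact; last exact: segment_compact.
apply: continuous_subspaceT; exact: clampI_cts.
Qed.

Lemma unitI_lc : locally_compact [set: unitI R].
Proof.
move=> x _; exists setT; first exact: filterT.
by split; [exact: unitI_compact | exact: closedT].
Qed.

Lemma unitI_regular : @regular_space (unitI R).
Proof. exact: uniform_regular. Qed.

Lemma cts_eval (Z W : topologicalType) (F : Z -> {compact-open, unitI R -> W}) :
  continuous F -> (forall z, continuous (F z)) ->
  continuous (fun zt : Z * unitI R => F zt.1 zt.2).
Proof.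
move=> cF cFz.
have h := (@continuous_uncurry_regular Z (unitI R) W F unitI_lc unitI_regular cF cFz).
have -> : (fun zt : Z * unitI R => F zt.1 zt.2) = uncurry F.
  by apply: funext => -[].
exact: h.
Qed.

Lemma cts_cst_fun (Z W : topologicalType) (g : Z -> W) :
  continuous g -> continuous (fun z => (fun _ : unitI R => g z) : {compact-open, unitI R -> W}).
Proof.
move=> cg.
exact: (@continuous_curry_fun Z (unitI R) W (fun zt => g zt.1) (cts_comp (@cts_fst _ _) cg)).
Qed.

End Eval.

Lemma set_type_eq (T : Type) (A : set T) (a b : set_type A) :
  set_val a = set_val b -> a = b.
Proof. by move=> h; apply: eq_sig_hprop => //= x ? ?; apply: Prop_irrelevance. Qed.

Section Main.
Variables (R : realType) (B X : topologicalType) (p : X -> B).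
Hypothesis cp : continuous p.

Lemma cts_fprod_proj : continuous (@fprod_proj B X p).
Proof.
apply: (@cts_comp _ _ _ (fun u : Defs.fprod p => (set_val u).1) p) => //.
apply: cts_comp; [exact: cts_set_val | exact: cts_fst].
Qed.

Section Back.
Variables (g : B -> X) (cg : continuous g) (hg : forall b, p (g b) = b).

Lemma cstPB_mem (b : B) :
  ((b, (fun _ => g b) : {compact-open, unitI R -> X}) : B * {compact-open, unitI R -> X})
    \in @PB_set R B X p.
Proof. apply/mem_set; split => //=; exact: cst_continuous. Qed.

Definition cstPB (b : B) : PB R p := exist (fun x => x \in @PB_set R B X p) _ (cstPB_mem b).

Lemma cstPBE b : set_val (cstPB b) = (b, fun _ => g b).
Proof. by []. Qed.

Lemma cts_cstPB : continuous cstPB.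
Proof.
apply: cts_into_sub => /=.
apply: (@cts_pair _ _ _ id (fun b => (fun _ => g b) : {compact-open, unitI R -> X})).
  exact: (fun x => @cvg_id _ _).
exact: cts_cst_fun.
Qed.

End Back.

Section PairF.
Variables (H : X * unitI R -> X) (hH : forall x t, p (H (x, t)) = p x).

Lemma pairF_mem (u : Defs.fprod p) (t : unitI R) :
  (H ((set_val u).1, t), H ((set_val u).2, t)) \in fprod_set p.
Proof.
apply/mem_set; rewrite /fprod_set /= !hH.
by case: u => -[x y] /= /set_mem.
Qed.

Definition pairF (u : Defs.fprod p) (t : unitI R) : Defs.fprod p :=
  exist (fun x => x \in fprod_set p) _ (pairF_mem u t).

Lemma pairFE (u : Defs.fprod p) (t : unitI R) :
  set_val (pairF u t) = (H ((set_val u).1, t), H ((set_val u).2, t)).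
Proof. by []. Qed.

End PairF.

Lemma PiE (u : PB R p) :
  set_val (Pi u) = ((set_val u).2 (i0 R), (set_val u).2 (i1 R)).
Proof. by []. Qed.


End Main.

Lemma back_dir (R : realType) (B X : topologicalType) (p : X -> B) :
  continuous p ->
  fw_homotopy_equivalent R p (@id B) -> TC_eq R p 0.
Proof.
move=> cp [f [g [[cf hf] [cg hg] hX _]]].
case: hX => H [cH fH H0 H1].
split; last by [].
exists (fun _ => setT); split; last by move=> u; exists ord0.
move=> _; split; first exact: openT.
pose b (v : set_type (@setT (Defs.fprod p))) := fprod_proj (set_val v).
have cb : continuous b.
  apply: cts_comp; [exact: cts_set_val | exact: cts_fprod_proj].
exists (fun v => @cstPB R B X p g hg (b v)); split.
  split => //; apply: (cts_comp cb); exact: (@cts_cstPB R B X p g cg hg).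
exists (fun z => @pairF R B X p H fH (set_val z.1) z.2); split.
- have c0 : continuous (fun z : set_type (@setT (Defs.fprod p)) * unitI R =>
      set_val z.1) by apply: (cts_compE (@cts_fst _ _) (@cts_set_val _ _)).
  have cv : continuous (fun z : set_type (@setT (Defs.fprod p)) * unitI R =>
      set_val (set_val z.1)) by apply: (cts_compE c0 (@cts_set_val _ _)).
  have c1 : continuous (fun z : set_type (@setT (Defs.fprod p)) * unitI R =>
      (set_val (set_val z.1)).1) by apply: (cts_compE cv (@cts_fst _ _)).
  have c2 : continuous (fun z : set_type (@setT (Defs.fprod p)) * unitI R =>
      (set_val (set_val z.1)).2) by apply: (cts_compE cv (@cts_snd _ _)).
  apply: cts_into_sub => /=.
  apply: cts_pair.
    apply: (cts_compE (cts_pair c1 (@cts_snd _ _)) cH) => //.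
  apply: (cts_compE (cts_pair c2 (@cts_snd _ _)) cH) => //.
- by move=> v t; rewrite /fprod_proj /= fH.
- move=> v; apply: set_type_eq => /=.
  rewrite pairFE PiE cstPBE /= !H0 /= /b /fprod_proj; case: v => -[[x y] hxy] /= _.
  have e : p x = p y by move: (set_mem hxy).
  by rewrite /= !hf e.
- move=> v; apply: set_type_eq => /=.
  by rewrite pairFE !H1; case: (set_val (set_val v)).
Qed.

Lemma fwd_dir (R : realType) (B X : topologicalType) (p : X -> B) (s : B -> X) :
  fw_pointed p s -> TC_eq R p 0 -> fw_homotopy_equivalent R p (@id B).
Proof.
move=> [cp cs hs] [[U [hU cov]] _].
have [oU [σ [[cσ fσ] [K [cK fK K0 K1]]]]] := hU ord0.
have hall : forall u, U ord0 u by move=> u; case: (cov u) => i; rewrite (ord1 i).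
have uxm : forall x, (s (p x), x) \in fprod_set p by move=> x; apply/mem_set; rewrite /fprod_set /= hs.
pose ux x : Defs.fprod p := exist (fun xy => xy \in fprod_set p) _ (uxm x).
pose emb x : set_type (U ord0) := exist (fun u => u \in U ord0) _ (mem_set (hall (ux x))).
have cemb : continuous emb.
  apply: cts_into_sub; apply: cts_into_sub => /=.
  apply: cts_pair; [exact: (cts_compE cp cs) | exact: (fun x => @cvg_id _ _)].
exists p, s; split.
- by split.
- by split.
- have cKe : continuous (fun z : X * unitI R => K (emb z.1, z.2)).
    apply: (cts_compE (cts_pair (cts_compE (@cts_fst _ _) cemb erefl) (@cts_snd _ _)) cK).
    by [].
  have cKv : continuous (fun z : X * unitI R => set_val (K (emb z.1, z.2))).
    by apply: (cts_compE cKe (@cts_set_val _ _)).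
  have fK1 : forall x t, p (set_val (K (emb x, t))).1 = p x.
    by move=> x t; have := fK (emb x) t; rewrite /fprod_proj /= hs.
  have fK2 : forall x t, p (set_val (K (emb x, t))).2 = p x.
    move=> x t; rewrite -(fK1 x t).
    by case: (K (emb x, t)) => -[a b] /= /set_mem.
  pose a0 x := (set_val (σ (emb x))).2 (i0 R).
  pose a1 x := (set_val (σ (emb x))).2 (i1 R).
  have h1 : fw_homotopic R p p a0 (s \o p).
    exists (fun z => (set_val (K (emb z.1, z.2))).1); split.
    + by apply: (cts_compE cKv (@cts_fst _ _)).
    + exact: fK1.
    + by move=> x; rewrite K0.
    + by move=> x; rewrite K1.
  have h2 : fw_homotopic R p p a1 id.
    exists (fun z => (set_val (K (emb z.1, z.2))).2); split.
    + by apply: (cts_compE cKv (@cts_snd _ _)).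
    + exact: fK2.
    + by move=> x; rewrite K0.
    + by move=> x; rewrite K1.
  have he : fw_homotopic R p p a0 a1.
    exists (fun z => (set_val (σ (emb z.1))).2 z.2); split.
    + apply: (@cts_eval R X X (fun x => (set_val (σ (emb x))).2)).
        have c3 : continuous (fun v : PB R p => (set_val v).2).
          exact: (cts_compE (@cts_set_val _ (@PB_set R B X p)) (@cts_snd B {compact-open, unitI R -> X}) erefl).
        have c4 := cts_compE cσ c3 erefl.
        exact: (cts_compE cemb c4 erefl).
      move=> x; case: (σ (emb x)) => -[b a] /= /set_mem [].
      by [].
    + move=> x t /=; have := fσ (emb x); rewrite /PB_proj /fprod_proj /= hs.
      by case: (σ (emb x)) => -[b a] /= /set_mem [_ ->].
    + by [].
    + by [].
  exact: (fw_homotopic_trans (fw_homotopic_sym h1) (fw_homotopic_trans he h2)).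
- exists (fun z => z.1); split.
  + exact: cts_fst.
  + by [].
  + by move=> b; rewrite /= hs.
  + by [].
Qed.

Theorem corollary2p7 (R : realType) (B X : topologicalType)
  (p : X -> B) (s : B -> X) :
  fw_pointed p s ->
  (TC_eq R p 0 <-> fw_homotopy_equivalent R p (@id B)).
Proof.
move=> hp; split; first exact: (@fwd_dir R B X p s hp).
by case: hp => cp _ _; exact: (@back_dir R B X p cp).
Qed.
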